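(* Let $d$ be a positive integer, let $S\in L^2(\mathbb{H})$ be the function constructed below, let $S_j(\omega)=2^{4j}S(2^j\cdot\omega)$ and $V_j=\{f\ast S_j: f\in L^2(\mathbb{H})\}$ for $j\in\mathbb{Z}$. Suppose $\Gamma$ is a lattice in $\mathbb{H}$ and $\phi\in V_0$ is such that $\{L_\gamma\phi\}_{\gamma\in\Gamma}$ is a normalized tight frame of $V_0$. Then for every $j\in\mathbb{Z}$, the family $\{\phi_{j,\gamma}\}_{\gamma\in\Gamma}$, where $\phi_{j,\gamma}(\omega)=2^{2j}\phi\big(\gamma^{-1}(2^j\cdot\omega)\big)$, is a normalized tight frame of $V_j$.
   Context: The Heisenberg group $\mathbb{H}$ is $\mathbb{R}^3$ with product $(p_1,q_1,t_1)(p_2,q_2,t_2)=(p_1+p_2,q_1+q_2,t_1+t_2+\frac12(p_1q_2-q_1p_2))$ and Lebesgue (Haar) measure; for $a>0$, $a\cdot(p,q,t)=(ap,aq,a^2t)$ is an automorphism. Convolution: $f\ast g(\omega)=\int_{\mathbb{H}}f(\nu)g(\nu^{-1}\omega)\,d\nu$. Left translation: $L_\omega f(v)=f(\omega^{-1}v)$. A lattice is a discrete subgroup with compact quotient. A family $\{g_n\}$ in a Hilbert space $\mathcal{H}$ is a normalized tight frame of $\mathcal{H}$ if $\sum_n|\langle f,g_n\rangle|^2=\|f\|^2$ for all $f\in\mathcal{H}$. For $\lambda\neq0$, $\rho_\lambda(p,q,t)\phi(x)=e^{i\lambda t}e^{i\lambda(px+\frac12pq)}\phi(x+q)$ on $L^2(\mathbb{R})$;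 the Fourier transform $\hat f(\lambda)=\int_{\mathbb{H}}f(\omega)\rho_\lambda(\omega)d\omega$ extends by Plancherel to a unitary map from $L^2(\mathbb{H})$ onto the square-integrable measurable fields of Hilbert–Schmidt operators on $L^2(\mathbb{R})$ over $\mathbb{R}\setminus\{0\}$ with respect to $d\mu(\lambda)=(2\pi)^{-2}|\lambda|d\lambda$. Construction of $S$: fix an orthonormal basis $\{e_i\}_{i\in\mathbb{N}_0}$ of $L^2(\mathbb{R})$, put $e_i^\lambda(x)=|\lambda|^{1/4}e_i(|\lambda|^{1/2}x)$, and for $k\in\mathbb{N}_0$ let $I^k=\left[-\frac{\pi}{2^{2k+1}d},-\frac{\pi}{2^{2k+3}d}\right)\cup\left(\frac{\pi}{2^{2k+3}d},\frac{\pi}{2^{2k+1}d}\right]$. With $u\otimes u$ the operator $g\mapsto\langle g,u\rangle u$, $S$ is the unique element of $L^2(\mathbb{H})$ with $\hat S(\lambda)=\sum_{i=0}^{2^{2k}}e_i^{\lambda/2\pi}\otimes e_i^{\lambda/2\pi}$ if $\lambda\in I^k$ for some $k$, and $\hat S(\lambda)=0$ otherwise. *)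

(* Defs.v *)
From mathcomp Require Import all_boot all_algebra.
From mathcomp Require Import all_classical all_reals all_analysis.
From mathcomp Require Import complex.
Import GRing.Theory Num.Theory numFieldNormedType.Exports.

Set Implicit Arguments.
Unset Strict Implicit.
Unset Printing Implicit Defensive.

Local Open Scope classical_set_scope.
Local Open Scope ring_scope.

Section Heisenberg.
Variable R : realType.

Definition cR (x : R) : R[i] := Complex x 0.
Definition cexp (th : R) : R[i] := Complex (cos th) (sin th).
Definition cconj (z : R[i]) : R[i] := Complex (complex.Re z) (- complex.Im z).
Definition csq (z : R[i]) : R := complex.Re z ^+ 2 + complex.Im z ^+ 2.

Definition cint {dsp} {T : measurableType dsp} (mu : {measure set T -> \bar R})
  (f : T -> R[i]) : R[i] :=
  Complex (Rintegral mu setT (fun x => complex.Re (f x)))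
          (Rintegral mu setT (fun x => complex.Im (f x))).

Definition L2 {dsp} {T : measurableType dsp} (mu : {measure set T -> \bar R})
  (f : T -> R[i]) : Prop :=
  [/\ measurable_fun setT (fun x => complex.Re (f x)),
      measurable_fun setT (fun x => complex.Im (f x)) &
      mu.-integrable setT (fun x => (csq (f x))%:E)].

Definition ip {dsp} {T : measurableType dsp} (mu : {measure set T -> \bar R})
  (f g : T -> R[i]) : R[i] := cint mu (fun x => f x * cconj (g x)).

Definition H := (R * R * R)%type.

Definition hmul (x y : H) : H :=
  match x, y with
  | (p1, q1, t1), (p2, q2, t2) =>
      (p1 + p2, q1 + q2, t1 + t2 + 2^-1 * (p1 * q2 - q1 * p2))
  end.

Definition hinv (x : H) : H :=
  match x with (p, q, t) => (- p, - q, - t) end.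

Definition hone : H := (0, 0, 0).

Definition hdil (a : R) (x : H) : H :=
  match x with (p, q, t) => (a * p, a * q, a ^+ 2 * t) end.

(* Haar measure = Lebesgue measure on R^3 *)
Definition hmu := ((@lebesgue_measure R \x @lebesgue_measure R)
                    \x @lebesgue_measure R)%E.

Definition hconv (f g : H -> R[i]) (w : H) : R[i] :=
  cint hmu (fun v => f v * g (hmul (hinv v) w)).

Definition Ltr (w : H) (f : H -> R[i]) : H -> R[i] :=
  fun v => f (hmul (hinv w) v).

Definition Sdil (S : H -> R[i]) (j : int) : H -> R[i] :=
  fun w => cR (((2 : R) ^ j) ^+ 4) * S (hdil ((2 : R) ^ j) w).

(* V_j = { f * S_j : f in L^2(H) }, as a subset of L^2(H)
   (elements of L^2 are identified up to a.e. equality) *)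
Definition Vsp (S : H -> R[i]) (j : int) : set (H -> R[i]) :=
  [set h | L2 hmu h /\
     exists f, L2 hmu f /\ {ae hmu, forall w, h w = hconv f (Sdil S j) w}].

Definition phijg (j : int) (g : H) (phi : H -> R[i]) : H -> R[i] :=
  fun w => cR (((2 : R) ^ j) ^+ 2) * phi (hmul (hinv g) (hdil ((2 : R) ^ j) w)).

Definition NTF (V : set (H -> R[i])) (G : set H) (g : H -> (H -> R[i])) : Prop :=
  (forall gam, G gam -> V (g gam)) /\
  forall f, V f ->
    (\esum_(gam in G) (csq (ip hmu f (g gam)))%:E = (complex.Re (ip hmu f f))%:E)%E.

Definition hsubgroup (G : set H) : Prop :=
  [/\ G hone, (forall x y, G x -> G y -> G (hmul x y)) &
      (forall x, G x -> G (hinv x))].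

Definition hdiscrete (G : set H) : Prop :=
  forall x, G x -> exists2 U, nbhs (x : (R * R * R)%type) U & (forall y, U y -> G y -> y = x).

(* compact quotient Gamma \ H: some compact K with Gamma K = H *)
Definition hcocompact (G : set H) : Prop :=
  exists K : set (R * R * R)%type, compact K /\
    forall w, exists g k, [/\ G g, K k & w = hmul g k].

Definition hlattice (G : set H) : Prop :=
  [/\ hsubgroup G, hdiscrete G & hcocompact G].

Definition leb := @lebesgue_measure R.

Definition ONB (e : nat -> R -> R[i]) : Prop :=
  [/\ (forall i, L2 leb (e i)),
      (forall i j, ip leb (e i) (e j) = if i == j then cR 1 else cR 0) &
      (forall f, L2 leb f -> (forall i, ip leb f (e i) = cR 0) ->
                 {ae leb, forall x, f x = cR 0})].

Definition escale (lam : R) (u : R -> R[i]) : R -> R[i] :=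
  fun x => cR (`|lam| `^ (4^-1)) * u (`|lam| `^ (2^-1) * x).

Definition rho (lam : R) (w : H) (u : R -> R[i]) : R -> R[i] :=
  match w with (p, q, t) =>
    fun x => cexp (lam * t) * cexp (lam * (p * x + 2^-1 * (p * q))) * u (x + q)
  end.

Definition Iset (d k : nat) : set R :=
  [set lam | (- (pi / ((2 : R) ^+ (2 * k + 1) * d%:R)) <= lam /\
              lam < - (pi / ((2 : R) ^+ (2 * k + 3) * d%:R))) \/
             (pi / ((2 : R) ^+ (2 * k + 3) * d%:R) < lam /\
              lam <= pi / ((2 : R) ^+ (2 * k + 1) * d%:R))].

(* tr( \hat S(lam) rho_lam(w)^* ) for lam in I^k, where
   \hat S(lam) = sum_{i=0}^{2^{2k}} e_i^{lam/2pi} (x) e_i^{lam/2pi} *)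
Definition trS (e : nat -> R -> R[i]) (k : nat) (lam : R) (w : H) : R[i] :=
  \sum_(i < (2 ^ (2 * k)).+1)
     ip leb (rho lam (hinv w) (escale (lam / (2 * pi)) (e i)))
            (escale (lam / (2 * pi)) (e i)).

(* Fourier inversion with Plancherel measure (2pi)^{-2} |lam| dlam:
   S(w) = sum_k \int_{I^k} tr(\hat S(lam) rho_lam(w)^* ) (2pi)^{-2}|lam| dlam *)
Definition Sfun (d : nat) (e : nat -> R -> R[i]) (w : H) : R[i] :=
  Complex
    (limn (fun n => \sum_(0 <= k < n) Rintegral leb (Iset d k)
        (fun lam => complex.Re (trS e k lam w) * (`|lam| / (2 * pi) ^+ 2))))
    (limn (fun n => \sum_(0 <= k < n) Rintegral leb (Iset d k)
        (fun lam => complex.Im (trS e k lam w) * (`|lam| / (2 * pi) ^+ 2)))).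

End Heisenberg.

(* Main.v *)
Require Import Defs.
From mathcomp Require Import all_boot all_algebra.
From mathcomp Require Import all_classical all_reals all_analysis.
From mathcomp Require Import complex.
From mathcomp Require Import order measurable_realfun ring lra.
Import Order.TTheory GRing.Theory Num.Theory numFieldNormedType.Exports.
Local Open Scope classical_set_scope.
Local Open Scope ring_scope.
Local Open Scope ereal_scope.

Lemma pmuleB (R : realType) (r : R) (y z : \bar R) : (0 < r)%R -> r%:E * (y - z) = r%:E * y - r%:E * z.
Proof.
move=> r0; case: y z => [y| |] [z| |] //=; rewrite ?addeNy ?addNye ?addye ?addey ?gt0_muley ?gt0_muleNy ?lte_fin ?addeNy ?addNye ?addye ?addey // -?EFinM -?EFinB ?mulrBr //.

Qed.

Module Aux.
Import HBNNSimple.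
Section gen.
Context d (T : measurableType d) (R : realType).
Variable mu : {measure set T -> \bar R}.

Lemma int_mono_gen (f g : T -> \bar R) : (forall x, 0 <= g x) ->
  (forall x, g x <= f x) -> \int[mu]_x g x <= \int[mu]_x f x.
Proof.
move=> g0 gf.
rewrite ge0_integralTE // ge0_integralTE //; last by move=> x; exact: le_trans (g0 x) (gf x).
apply: le_ereal_sup => _ [h hg <-]; exists h => //= x; exact: le_trans (hg x) (gf x).
Qed.

Lemma int_supbound (f : T -> \bar R) (B : \bar R) : (forall x, 0 <= f x) ->
  (forall h : {nnsfun T >-> R}, (forall x, (h x)%:E <= f x) -> \int[mu]_x (h x)%:E <= B) ->
  \int[mu]_x f x <= B.
Proof.
move=> f0 hB; rewrite ge0_integralTE //.
apply: ge_ereal_sup => _ [h hf <-].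
have := hB h hf; rewrite integral_nnsfun // patch_setT.
by [].
Qed.

Lemma int_comp_scale (phi : T -> T) (c : R) : (0 < c)%R -> measurable_fun setT phi ->
  (forall A, measurable A -> mu (phi @^-1` A) = c%:E * mu A) ->
  forall F : T -> \bar R, measurable_fun [set: T] F -> (forall x, 0 <= F x) ->
  \int[mu]_x F (phi x) = c%:E * \int[mu]_x F x.
Proof.
move=> c0 mphi hphi F mF F0.
have := ge0_integral_pushforward mphi mu measurableT mF (fun y _ => F0 y).
rewrite preimage_setT => <-.
pose k : {nonneg R} := NngNum (ltW c0).
rewrite (@eq_measure_integral _ _ _ _ (mscale k mu) (pushforward mu phi)); last first.
  by move=> A mA _; exact: hphi.
by rewrite (@ge0_integral_mscale _ _ _ mu setT measurableT k F mF).
Qed.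

Lemma int_comp_le (phi psi : T -> T) (c k : R) : (0 < c)%R -> (0 < k)%R ->
  measurable_fun setT phi -> measurable_fun setT psi ->
  cancel phi psi -> cancel psi phi ->
  (forall A, measurable A -> mu (phi @^-1` A) = c%:E * mu A) ->
  forall f : T -> \bar R, (forall x, 0 <= f x) ->
  \int[mu]_x (k%:E * f (phi x)) <= (k * c)%:E * \int[mu]_x f x.
Proof.
move=> c0 k0 mphi mpsi phiK psiK hphi f f0.
apply: int_supbound => [x|h hf]; first by rewrite mule_ge0 // lee_fin ltW.
have mh : measurable_fun setT (fun y => (h (psi y))%:E).
  by apply/measurable_EFinP; apply: measurableT_comp => //.
have -> : \int[mu]_x (h x)%:E = \int[mu]_x (h (psi (phi x)))%:E.
  by apply: eq_integral => x _; rewrite phiK.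
rewrite (@int_comp_scale phi c c0 mphi hphi _ mh); last by move=> x; rewrite lee_fin.
have -> : \int[mu]_x (h (psi x))%:E = \int[mu]_x (k%:E * (k^-1 * h (psi x))%:E).
  apply: eq_integral => x _; rewrite -EFinM mulrA mulfV ?mul1r //; exact: lt0r_neq0.
rewrite ge0_integralZl_EFin //; last 3 first.
- by move=> x _; rewrite lee_fin mulr_ge0 // invr_ge0 ltW.
- by apply/measurable_EFinP; apply: measurable_funM => //; apply: measurableT_comp.
- exact: ltW.
have hle : \int[mu]_x (k^-1 * h (psi x))%:E <= \int[mu]_x f x.
  apply: int_mono_gen => x; first by rewrite lee_fin mulr_ge0 // invr_ge0 ltW.
  have := hf (psi x); rewrite psiK => hx.
  by rewrite EFinM lee_pdivrMl.
rewrite muleA -EFinM mulrC.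
apply: lee_wpmul2l; first by rewrite lee_fin mulr_ge0 // ltW.
exact: hle.
Qed.

Lemma int_comp_eq (phi psi : T -> T) (c k : R) : (0 < c)%R -> (0 < k)%R ->
  measurable_fun setT phi -> measurable_fun setT psi ->
  cancel phi psi -> cancel psi phi ->
  (forall A, measurable A -> mu (phi @^-1` A) = c%:E * mu A) ->
  forall f : T -> \bar R, (forall x, 0 <= f x) ->
  \int[mu]_x (k%:E * f (phi x)) = (k * c)%:E * \int[mu]_x f x.
Proof.
move=> c0 k0 mphi mpsi phiK psiK hphi f f0.
apply/eqP; rewrite eq_le; apply/andP; split; first exact: (@int_comp_le phi psi c k c0 k0 mphi mpsi phiK psiK hphi f f0).
have hpsi : forall A, measurable A -> mu (psi @^-1` A) = c^-1%:E * mu A.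
  move=> A mA.
  have mA' : measurable (psi @^-1` A).
    by rewrite -[X in measurable X]setTI; apply: mpsi.
  have : mu A = c%:E * mu (psi @^-1` A).
    rewrite -hphi //; congr (mu _); apply/funext => x /=.
    by rewrite /preimage /= phiK.
  move=> ->; rewrite muleA -EFinM mulVf ?mul1e //; exact: lt0r_neq0.
have ci : (0 < c^-1)%R by rewrite invr_gt0.
have ki : (0 < k^-1)%R by rewrite invr_gt0.
have k0' : 0 <= k%:E by rewrite lee_fin ltW.
have := @int_comp_le psi phi c^-1 k^-1 ci ki mpsi mphi psiK phiK hpsi
  (fun x => k%:E * f (phi x)) (fun x => mule_ge0 k0' (f0 _)).
have -> : \int[mu]_x (k^-1%:E * (k%:E * f (phi (psi x)))) = \int[mu]_x f x.
  apply: eq_integral => x _; rewrite psiK muleA -EFinM mulVf ?mul1e //; exact: lt0r_neq0.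
rewrite -invfM mulrC lee_pdivlMl //; exact: mulr_gt0.
Qed.

Lemma int_comp_signed (phi psi : T -> T) (c k : R) : (0 < c)%R -> (0 < k)%R ->
  measurable_fun setT phi -> measurable_fun setT psi ->
  cancel phi psi -> cancel psi phi ->
  (forall A, measurable A -> mu (phi @^-1` A) = c%:E * mu A) ->
  forall f : T -> \bar R,
  \int[mu]_x (k%:E * f (phi x)) = (k * c)%:E * \int[mu]_x f x.
Proof.
move=> c0 k0 mphi mpsi phiK psiK hphi f.
rewrite integralE [in RHS]integralE.
have -> : (fun x => k%:E * f (phi x))^\+ = fun x => k%:E * f^\+ (phi x).
  by apply/funext => x; rewrite !funeposE maxe_pMr ?mule0 // lee_fin ltW.
have -> : (fun x => k%:E * f (phi x))^\- = fun x => k%:E * f^\- (phi x).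
  by apply/funext => x; rewrite !funenegE -muleN maxe_pMr ?mule0 // lee_fin ltW.
rewrite (@int_comp_eq phi psi c k c0 k0 mphi mpsi phiK psiK hphi _ (funepos_ge0 f)).
rewrite (@int_comp_eq phi psi c k c0 k0 mphi mpsi phiK psiK hphi _ (funeneg_ge0 f)).
by rewrite [RHS]pmuleB //; apply: mulr_gt0.
Qed.

Lemma Rint_comp (phi psi : T -> T) (c k : R) : (0 < c)%R -> (0 < k)%R ->
  measurable_fun setT phi -> measurable_fun setT psi ->
  cancel phi psi -> cancel psi phi ->
  (forall A, measurable A -> mu (phi @^-1` A) = c%:E * mu A) ->
  forall G : T -> R,
  Rintegral mu setT (fun x => k * G (phi x))%R = (k * c * Rintegral mu setT G)%R.
Proof.
move=> c0 k0 mphi mpsi phiK psiK hphi G.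
rewrite /Rintegral.
have -> : (fun x => (k * G (phi x))%:E) = fun x => k%:E * (G (phi x))%:E by [].
rewrite (@int_comp_signed phi psi c k c0 k0 mphi mpsi phiK psiK hphi (fun x => (G x)%:E)).
have kc : (0 < (k * c)%:E) by rewrite lte_fin; apply: mulr_gt0.
case: (\int[mu]_x (G x)%:E) => [r| |] //=.
- by rewrite gt0_muley //= mulr0.
- by rewrite gt0_muleNy //= mulr0.
Qed.
End gen.

Lemma prod_scale d1 d2 (T1 : measurableType d1) (T2 : measurableType d2) (R : realType)
  (m1 : {measure set T1 -> \bar R}) (m2 : {sigma_finite_measure set T2 -> \bar R})
  (f1 : T1 -> T1) (f2 : T2 -> T2) (c1 c2 : R) : (0 < c1)%R -> (0 < c2)%R ->
  measurable_fun setT f1 -> measurable_fun setT f2 ->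
  (forall A, measurable A -> m1 (f1 @^-1` A) = c1%:E * m1 A) ->
  (forall A, measurable A -> m2 (f2 @^-1` A) = c2%:E * m2 A) ->
  forall A : set (T1 * T2), measurable A ->
  (m1 \x m2) ((fun x => (f1 x.1, f2 x.2)) @^-1` A) = (c1 * c2)%:E * (m1 \x m2) A.
Proof.
move=> c10 c20 mf1 mf2 h1 h2 A mA.
rewrite /product_measure1 /=.
have -> : (fun x => m2 (xsection ((fun x => (f1 x.1, f2 x.2)) @^-1` A) x)) =
          (fun x => c2%:E * (m2 \o xsection A) (f1 x)).
  apply/funext => x /=; rewrite -h2; last exact: measurable_xsection.
  congr (m2 _); apply/seteqP; split => y; rewrite /xsection /preimage /= !in_setE //.
have mg := measurable_fun_xsection m2 mA.
have mg' : measurable_fun setT (fun x => (m2 \o xsection A) (f1 x)).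
  exact: measurableT_comp.
rewrite (ge0_integralZl_EFin _ _ (fun x _ => measure_ge0 _ _) mg') ?(ltW c20) //.
rewrite (@int_comp_scale _ _ _ m1 f1 c1 c10 mf1 h1 _ mg) //.
by rewrite muleA -EFinM mulrC.
Qed.
Local Open Scope ring_scope.
Lemma leb_scale (R : realType) (k : R) : 0 < k -> forall B, measurable B ->
  (@lebesgue_measure R) (( *%R k) @^-1` B) = ((k^-1)%:E * lebesgue_measure B)%E.
Proof.
move=> k0.
pose kk : {nonneg R} := NngNum (ltW k0).
pose f : measurableTypeR R -> measurableTypeR R := fun x => k * x.
have mk : measurable_fun setT f by exact: (@mulrl_measurable R setT k).
have := @lebesgue_measure_unique R (mscale kk (pushforward lebesgue_measure f)).
move=> /(_ mk) H B mB.
have hoc : forall X, ocitv X -> lebesgue_measure X = mscale kk (pushforward lebesgue_measure f) X.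
  move=> mm X [[a b] _ <-].
  rewrite [X in _ = X](_ : _ = (k%:E * lebesgue_measure (f @^-1` `]a, b]%classic))%E) //.
  have -> : f @^-1` `]a, b]%classic = `]a / k, b / k]%classic.
    by apply/seteqP; split => x /=; rewrite /f !in_itv /= ltr_pdivrMr // ler_pdivlMr // mulrC.
  rewrite !lebesgue_measure_itv /= !lte_fin ltr_pM2r ?invr_gt0 //.
  case: ifP => ab; last by rewrite mule0.
  rewrite -!EFinB -EFinM; congr EFin.
  by field; exact: lt0r_neq0.
have := H (hoc mk) B mB.
move=> ->; rewrite [X in _ = (_ * X)%E](_ : _ = (k%:E * lebesgue_measure (f @^-1` B))%E) //.
rewrite muleA -EFinM mulVf ?mul1e //; exact: lt0r_neq0.
Qed.

Local Open Scope ring_scope.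
Section Heis.
Variable R : realType.

Lemma hdilE (a : R) : hdil a = fun x : H R => ((a * x.1.1, a * x.1.2), a^+2 * x.2).
Proof. by apply/funext => -[[p q] t]. Qed.

Lemma mprod_map d1 d2 (T1 : measurableType d1) (T2 : measurableType d2)
  (f1 : T1 -> T1) (f2 : T2 -> T2) : measurable_fun setT f1 -> measurable_fun setT f2 ->
  measurable_fun setT (fun x : T1 * T2 => (f1 x.1, f2 x.2)).
Proof.
move=> m1 m2; apply: measurable_fun_pair.
- exact: (measurableT_comp m1 measurable_fst).
- exact: (measurableT_comp m2 measurable_snd).
Qed.

Lemma hmu_scale (a : R) : 0 < a -> forall A, measurable A ->
  hmu (hdil a @^-1` A) = (((a^-1 * a^-1) * (a^+2)^-1)%:E * hmu A)%E.
Proof.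
move=> a0 A mA; rewrite hdilE /hmu.
have a20 : 0 < a ^+ 2 by rewrite exprn_gt0.
have ma : measurable_fun setT (( *%R a) : measurableTypeR R -> measurableTypeR R).
  exact: (@mulrl_measurable R setT a).
have ma2 : measurable_fun setT (( *%R (a^+2)) : measurableTypeR R -> measurableTypeR R).
  exact: (@mulrl_measurable R setT (a^+2)).
have := (@prod_scale _ _ _ _ R (@leb R \x @leb R)%E (@leb R)
   (fun y => (a * y.1, a * y.2)) ( *%R (a^+2)) (a^-1 * a^-1) (a^+2)^-1).
move=> /(_ _ _ _ _ _ _ A mA) -> //.
- by rewrite mulr_gt0 // invr_gt0.
- by rewrite invr_gt0.
- exact: mprod_map.
- move=> B mB.
  apply: (@prod_scale _ _ _ _ R (@leb R) (@leb R) ( *%R a) ( *%R a)) => //; rewrite ?invr_gt0 //.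
  + exact: leb_scale.
  + exact: leb_scale.
- exact: leb_scale.
Qed.

Definition ca (a : R) : R := a^-1 * a^-1 * (a^+2)^-1.

Lemma ca_gt0 (a : R) : 0 < a -> 0 < ca a.
Proof. by move=> a0; rewrite /ca !mulr_gt0 // invr_gt0 // exprn_gt0. Qed.

Lemma hdilK (a : R) : 0 < a -> cancel (hdil a) (hdil a^-1).
Proof.
move=> a0 [[p q] t] /=; have an : a != 0 by exact: lt0r_neq0.
rewrite !mulrA.
have e1 : a^-1 * a = 1 by rewrite mulVf.
have e2 : a^-1 ^+ 2 * a * a = 1 by rewrite -mulrA -expr2 -exprMn mulVf // expr1n.
by rewrite e1 e2 !mul1r.
Qed.

Lemma mhdil (a : R) : measurable_fun setT (@hdil R a : (measurableTypeR R * measurableTypeR R * measurableTypeR R)%type -> _).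
Proof.
rewrite hdilE.
apply: (@mprod_map _ _ _ _ (fun y => (a * y.1, a * y.2)) ( *%R (a^+2))); last exact: (@mulrl_measurable R setT (a^+2)).
apply: (@mprod_map _ _ _ _ ( *%R a) ( *%R a)); exact: (@mulrl_measurable R setT a).
Qed.

Lemma Rint_hdil (a k : R) : 0 < a -> 0 < k -> forall G : H R -> R,
  Rintegral (@hmu R) setT (fun x => k * G (hdil a x)) = k * ca a * Rintegral (@hmu R) setT G.
Proof.
move=> a0 k0 G.
have ai : 0 < a^-1 by rewrite invr_gt0.
have hdilK' : cancel (hdil a^-1) (@hdil R a) by have := @hdilK a^-1 ai; rewrite invrK.
exact: (@Rint_comp _ _ _ (@hmu R) (hdil a) (hdil a^-1) (ca a) k (@ca_gt0 a a0) k0 (mhdil a) (mhdil a^-1) (@hdilK a a0) hdilK' (@hmu_scale a a0)).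
Qed.

Lemma int_hdil (a k : R) : 0 < a -> 0 < k -> forall f : H R -> \bar R,
  (\int[@hmu R]_x (k%:E * f (hdil a x)) = (k * ca a)%:E * \int[@hmu R]_x f x)%E.
Proof.
move=> a0 k0 f.
have ai : 0 < a^-1 by rewrite invr_gt0.
have hdilK' : cancel (hdil a^-1) (@hdil R a) by have := @hdilK a^-1 ai; rewrite invrK.
exact: (@int_comp_signed _ _ _ (@hmu R) (hdil a) (hdil a^-1) (ca a) k (@ca_gt0 a a0) k0 (mhdil a) (mhdil a^-1) (@hdilK a a0) hdilK' (@hmu_scale a a0)).
Qed.

Lemma ReM (a : R) (z : R[i]) : complex.Re (cR a * z) = a * complex.Re z.
Proof. by case: z => x y /=; rewrite mul0r subr0. Qed.

Lemma ImM (a : R) (z : R[i]) : complex.Im (cR a * z) = a * complex.Im z.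
Proof. by case: z => x y /=; rewrite mul0r addr0. Qed.

Lemma cRM (a b : R) : cR (a * b) = cR a * cR b.
Proof. by rewrite /cR /=; congr Complex; rewrite ?mul0r ?mulr0 ?subr0 ?addr0. Qed.

Lemma cR1 : cR 1 = 1 :> R[i].
Proof. by []. Qed.

Lemma cconjM (a : R) (z : R[i]) : cconj (cR a * z) = cR a * cconj z.
Proof. by case: z => x y; rewrite /cconj /cR /=; congr Complex; rewrite ?mul0r ?subr0 ?addr0 ?mulrN. Qed.

Lemma cint_hdil (b k : R) (F : H R -> R[i]) : 0 < b -> 0 < k ->
  cint (@hmu R) (fun u => cR k * F (hdil b u)) = cR (k * ca b) * cint (@hmu R) F.
Proof.
move=> b0 k0; rewrite /cint.
have -> : (fun x => complex.Re (cR k * F (hdil b x))) = (fun x => k * complex.Re (F (hdil b x))).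
  by apply/funext => x; rewrite ReM.
have -> : (fun x => complex.Im (cR k * F (hdil b x))) = (fun x => k * complex.Im (F (hdil b x))).
  by apply/funext => x; rewrite ImM.
rewrite (Rint_hdil b k b0 k0 (fun x => complex.Re (F x))) (Rint_hdil b k b0 k0 (fun x => complex.Im (F x))).
by rewrite /cR /=; congr Complex; rewrite ?mul0r ?subr0 ?addr0.
Qed.

Definition Dil (a : R) (h : H R -> R[i]) : H R -> R[i] :=
  fun w => cR (a ^+ 2) * h (hdil a w).

Lemma ip_dil (a : R) (F G : H R -> R[i]) : 0 < a ->
  ip (@hmu R) (Dil a F) (Dil a G) = ip (@hmu R) F G.
Proof.
move=> a0; rewrite /ip /Dil.
have a4 : 0 < a ^+ 4 by rewrite exprn_gt0.
have -> : (fun x => cR (a ^+ 2) * F (hdil a x) * cconj (cR (a ^+ 2) * G (hdil a x))) =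
   (fun x => cR (a ^+ 4) * (fun y => F y * cconj (G y)) (hdil a x)).
  apply/funext => x /=; rewrite cconjM.
  have -> : a ^+ 4 = a ^+ 2 * a ^+ 2 by rewrite -exprD.
  rewrite cRM; ring.
rewrite (cint_hdil a (a ^+ 4) (fun y => F y * cconj (G y)) a0 a4).
have -> : a ^+ 4 * ca a = 1.
  rewrite /ca; have an : a != 0 by exact: lt0r_neq0.
  by field; rewrite ?expf_neq0.
by rewrite cR1 mul1r.
Qed.

Lemma hdil_conv (b c : R) (u w : H R) :
  hdil c (hmul (hinv (hdil b u)) (hdil b w)) = hdil (b * c) (hmul (hinv u) w).
Proof.
case: u => [[u1 u2] u3]; case: w => [[w1 w2] w3] /=.
congr (_, _, _); ring.
Qed.

Lemma cRX (a : R) n : cR (a ^+ n) = cR a ^+ n.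
Proof.
elim: n => [|n IH]; first by rewrite !expr0.
by rewrite !exprS cRM IH.
Qed.

Lemma hconv_dil (S f : H R -> R[i]) (b : R) (j j' : int) : 0 < b ->
  (2 : R) ^ j = b * (2 : R) ^ j' -> forall w,
  cR (b ^+ 2) * hconv f (Sdil S j') (hdil b w) = hconv (Dil b f) (Sdil S j) w.
Proof.
move=> b0 hj w; rewrite /hconv /Dil /Sdil.
have b6 : 0 < b ^+ 6 by rewrite exprn_gt0.
have -> : (fun v => cR (b ^+ 2) * f (hdil b v) *
   (cR (((2 : R) ^ j) ^+ 4) * S (hdil ((2 : R) ^ j) (hmul (hinv v) w)))) =
  (fun u => cR (b ^+ 6) * (fun v => f v * (cR (((2 : R) ^ j') ^+ 4) *
     S (hdil ((2 : R) ^ j') (hmul (hinv v) (hdil b w))))) (hdil b u)).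
  apply/funext => u /=; rewrite hdil_conv hj.
  have -> : b ^+ 6 = b ^+ 2 * b ^+ 4 by rewrite -exprD.
  rewrite exprMn !cRM; ring.
rewrite (cint_hdil b (b ^+ 6) (fun v => f v * (cR (((2 : R) ^ j') ^+ 4) *
     S (hdil ((2 : R) ^ j') (hmul (hinv v) (hdil b w))))) b0 b6).
congr (cR _ * _).
rewrite /ca; have bn : b != 0 by exact: lt0r_neq0.
by field; rewrite ?expf_neq0.
Qed.

Lemma DilK (a : R) (f : H R -> R[i]) : 0 < a -> Dil a (Dil a^-1 f) = f.
Proof.
move=> a0; apply/funext => w; rewrite /Dil.
have ai : 0 < a^-1 by rewrite invr_gt0.
rewrite (@hdilK a a0).
rewrite mulrA -cRM -exprMn mulfV ?expr1n ?cR1 ?mul1r //; exact: lt0r_neq0.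
Qed.

Lemma csqM (r : R) (z : R[i]) : csq (cR r * z) = r ^+ 2 * csq z.
Proof. by rewrite /csq ReM ImM !exprMn mulrDr. Qed.

Lemma ae_dil (a : R) (P : H R -> Prop) : 0 < a ->
  {ae @hmu R, forall w, P w} -> {ae @hmu R, forall w, P (hdil a w)}.
Proof.
move=> a0 [N [mN N0 sN]].
exists (hdil a @^-1` N); split.
- by rewrite -[X in measurable X]setTI; apply: mhdil.
- by rewrite hmu_scale // N0 mule0.
- by move=> x /= nPx; apply: sN.
Qed.

Lemma ae_dil' (a : R) (P Q : H R -> Prop) : 0 < a ->
  (forall w, P (hdil a w) -> Q w) ->
  {ae @hmu R, forall w, P w} -> {ae @hmu R, forall w, Q w}.
Proof.
move=> a0 PQ [N [mN N0 sN]].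
exists (hdil a @^-1` N); split.
- by rewrite -[X in measurable X]setTI; apply: mhdil.
- by rewrite hmu_scale // N0 mule0.
- move=> x /= nQx; apply: sN => /= Px; apply: nQx; exact: PQ.
Qed.

Lemma L2_dil (a : R) (h : H R -> R[i]) : 0 < a -> L2 (@hmu R) h -> L2 (@hmu R) (Dil a h).
Proof.
move=> a0 [mRe mIm ih]; split.
- have -> : (fun x => complex.Re (Dil a h x)) = (fun x => a ^+ 2 * complex.Re (h (hdil a x))).
    by apply/funext => x; rewrite /Dil ReM.
  apply: measurable_funM => //; exact: (measurableT_comp mRe (mhdil a)).
- have -> : (fun x => complex.Im (Dil a h x)) = (fun x => a ^+ 2 * complex.Im (h (hdil a x))).
    by apply/funext => x; rewrite /Dil ImM.
  apply: measurable_funM => //; exact: (measurableT_comp mIm (mhdil a)).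
move/integrableP : ih => [mcsq fin].
have e : (fun x => (csq (Dil a h x))%:E) = (fun x => ((a ^+ 4) * csq (h (hdil a x)))%:E).
  by apply/funext => x; rewrite /Dil csqM -exprM.
apply/integrableP; split.
- rewrite e; apply/measurable_EFinP.
  apply: measurable_funM => //.
  move/measurable_EFinP : mcsq => mcsq.
  exact: (measurableT_comp mcsq (mhdil a)).
have a4 : 0 < a ^+ 4 by rewrite exprn_gt0.
have -> : (fun x => `|(csq (Dil a h x))%:E|%E) = (fun x => (a ^+ 4)%:E * (fun y => `|(csq (h y))%:E|%E) (hdil a x))%E.
  apply/funext => x; rewrite /Dil csqM -exprM /= normrM (ger0_norm (exprn_ge0 _ (ltW a0))) EFinM //.
rewrite (int_hdil a (a ^+ 4) a0 a4 (fun y => `|(csq (h y))%:E|%E)).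
have -> : a ^+ 4 * ca a = 1.
  rewrite /ca; have an : a != 0 by exact: lt0r_neq0.
  by field; rewrite ?expf_neq0.
by rewrite mul1e.
Qed.

Lemma Vsp_dil (S h : H R -> R[i]) (b : R) (j j' : int) : 0 < b ->
  (2 : R) ^ j = b * (2 : R) ^ j' -> Vsp S j' h -> Vsp S j (Dil b h).
Proof.
move=> b0 hj [Lh [f [Lf ae]]]; split; first exact: L2_dil.
exists (Dil b f); split; first exact: L2_dil.
apply: (@ae_dil' b _ _ b0 _ ae) => w /= ew.
by rewrite /Dil ew (@hconv_dil S f b j j' b0 hj).
Qed.
End Heis.
Arguments Dil {R}. Arguments Vsp_dil {R}. Arguments DilK {R}. Arguments ip_dil {R}.
End Aux.
Import Aux.

Theorem mainTheorem4 (R : realType) (d : nat) (e : nat -> R -> R[i])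
  (Gam : set (H R)) (phi : H R -> R[i]) :
  (0 < d)%N ->
  ONB e ->
  hlattice Gam ->
  Vsp (Sfun d e) 0 phi ->
  NTF (Vsp (Sfun d e) 0) Gam (fun g => Ltr g phi) ->
  forall j : int, NTF (Vsp (Sfun d e) j) Gam (fun g => phijg j g phi).
Proof.
move=> _ _ _ _ [H1 H2] j.
set S := Sfun d e.
have a0 : (0 < (2 : R) ^ j)%R by apply: exprz_gt0.
have phiE : forall g, phijg j g phi = Dil ((2 : R) ^ j) (Ltr g phi) by [].
split.
- move=> g Gg; rewrite phiE; apply: (Vsp_dil _ _ _ _ 0) => //; last exact: H1.
  by rewrite expr0z mulr1.
- move=> f Vf.
  have ai : (0 < ((2 : R) ^ j)^-1)%R by rewrite invr_gt0.
  pose f0 := Dil ((2 : R) ^ j)^-1 f.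
  have Vf0 : Vsp S 0 f0.
    apply: (Vsp_dil _ _ _ _ j) => //.
    by rewrite expr0z mulVf // lt0r_neq0.
  have ff : f = Dil ((2 : R) ^ j) f0 by rewrite /f0 DilK.
  have E1 : (fun gam => (csq (ip (@hmu R) f (phijg j gam phi)))%:E) =
            (fun gam => (csq (ip (@hmu R) f0 (Ltr gam phi)))%:E).
    by apply/funext => gam; rewrite phiE {1}ff ip_dil.
  rewrite E1 {1 2}ff ip_dil //; exact: H2.
Qed.
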